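(* On the domain $\{(p,q,r): p<q,\ r>1\}$, $\Theta(p,q,r)$ is monotone increasing in $p$ (for fixed $q$ and $r$) and monotone decreasing in $q$ (for fixed $p$ and $r$).
   Context: For $p<q$ and $r>1$ define $$\Theta(p,q,r)=\int_1^r\frac{dx}{\sqrt{\left(\frac{r^p-r^q}{r^p-1}+\frac{r^q-1}{r^p-1}x^p\right)^{2/q}-x^2}}\quad (p\ne0,\ q\ne0),$$ $$\Theta(0,q,r)=\int_1^r\frac{dx}{\sqrt{\left(1+\frac{r^q-1}{\log r}\log x\right)^{2/q}-x^2}},\qquad \Theta(p,0,r)=\int_1^r\frac{dx}{\sqrt{r^{\frac{2(x^p-1)}{r^p-1}}-x^2}}.$$ *)

(* Defs.v *)
From HB Require Import structures.
From mathcomp Require Import all_boot all_order all_algebra.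
From mathcomp Require Import all_classical all_reals all_analysis.
Set Implicit Arguments. Unset Strict Implicit. Unset Printing Implicit Defensive.
Import Order.TTheory GRing.Theory Num.Theory.
Import numFieldNormedType.Exports.
Local Open Scope classical_set_scope.
Local Open Scope ring_scope.

(* Integrand of Theta(p,q,r), with the three cases of the paper:
   p <> 0 and q <> 0; p = 0; q = 0.  (p = q = 0 never occurs since p < q.) *)
Definition theta_integrand (R : realType) (p q r x : R) : R :=
  if (p != 0) && (q != 0) then
    1 / Num.sqrt (((r `^ p - r `^ q) / (r `^ p - 1)
                   + (r `^ q - 1) / (r `^ p - 1) * x `^ p) `^ (2 / q) - x ^+ 2)
  else if p == 0 then
    1 / Num.sqrt ((1 + (r `^ q - 1) / ln r * ln x) `^ (2 / q) - x ^+ 2)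
  else
    1 / Num.sqrt (r `^ (2 * (x `^ p - 1) / (r `^ p - 1)) - x ^+ 2).

(* Theta(p,q,r) = \int_1^r integrand dx, as a (nonnegative-integrand)
   Lebesgue integral over the open interval ]1, r[ (the integrand has
   integrable singularities at both endpoints). *)
Definition Theta (R : realType) (p q r : R) : \bar R :=
  (\int[lebesgue_measure]_(x in `]1%R, r[%classic) (theta_integrand p q r x)%:E)%E.

(* Main.v *)
Require Import Defs.
From HB Require Import structures.
From mathcomp Require Import all_boot all_order all_algebra.
From mathcomp Require Import all_classical all_reals all_analysis.
From mathcomp Require Import ring lra.
Import Order.TTheory GRing.Theory Num.Theory.
Local Open Scope ring_scope.

Section Core.
Variable R : realType.
Implicit Types s u v w c : R.

Lemma exp_tan c y : y != c -> expR c * (1 + (y - c)) < expR y.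
Proof.
move=> yc; have h := @expR_gt1Dx R (y - c) (_ : y - c != 0); rewrite subr_eq0 in h; have {}h := h yc.
have -> : expR y = expR c * expR (y - c) by rewrite -expRD addrC subrK.
by rewrite ltr_pM2l // expR_gt0.
Qed.

Lemma bern s u : 0 < s < 1 -> u != 0 -> expR (s * u) < 1 - s + s * expR u.
Proof.
move=> /andP[s0 s1] u0.
have h1 := @exp_tan (s * u) 0.
have h2 := @exp_tan (s * u) u.
rewrite expR0 in h1.
have n1 : (0 : R) != s * u by rewrite eq_sym mulf_neq0 // gt_eqF.
have n2 : u != s * u.
  apply/negP => /eqP e; have : (1 - s) * u = 0 by rewrite mulrBl mul1r -e subrr.
  by move/eqP; rewrite mulf_eq0 subr_eq0 (gt_eqF s1) (negbTE u0).
have {h1}h1 := h1 n1; have {h2}h2 := h2 n2.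
set E := expR (s * u) in h1 h2 *; set F := expR u in h2 *.
have : (1 - s) * (E * (1 + (0 - s * u))) + s * (E * (1 + (u - s * u))) < (1 - s) * 1 + s * F.
  apply: ltr_leD; first by rewrite ltr_pM2l // subr_gt0.
  by rewrite ler_pM2l // ltW.
have -> : (1 - s) * (E * (1 + (0 - s * u))) + s * (E * (1 + (u - s * u))) = E by ring.
by rewrite mulr1.
Qed.

Lemma bern2 s v w : 0 < s < 1 -> v != w ->
  expR (s * v) < expR (s * w) * (1 - s) + s * expR (s * w) * expR (v - w).
Proof.
move=> hs vw; have h := @bern s (v - w) hs (_ : v - w != 0); rewrite subr_eq0 in h; have {}h := h vw.
have -> : expR (s * v) = expR (s * w) * expR (s * (v - w)).
  by rewrite -expRD; congr expR; ring.
have -> : expR (s * w) * (1 - s) + s * expR (s * w) * expR (v - w)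
   = expR (s * w) * (1 - s + s * expR (v - w)) by ring.
by rewrite ltr_pM2l // expR_gt0.
Qed.

Definition psi c s := if c == 0 then s else (expR (s * c) - 1) / (expR c - 1).

Lemma psi_incr c s1 s2 : s1 < s2 -> psi c s1 < psi c s2.
Proof.
rewrite /psi; case: eqP => // /eqP c0 h.
case: (ltrgtP c 0) => [cn|cp|/eqP]; last by rewrite (negbTE c0).
- have d : expR c - 1 < 0 by rewrite subr_lt0 expR_lt1.
  by rewrite ltr_nM2r ?invr_lt0 // ltrD2r ltr_expR ltr_nM2r.
- have d : 0 < expR c - 1 by rewrite subr_gt0 expR_gt1.
  by rewrite ltr_pM2r ?invr_gt0 // ltrD2r ltr_expR ltr_pM2r.
Qed.

Lemma psi_le c s1 s2 : psi c s1 <= psi c s2 -> s1 <= s2.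
Proof. by move=> h; rewrite leNgt; apply/negP => /(psi_incr c); rewrite ltNge h. Qed.

Lemma psi_leW c s1 s2 : s1 <= s2 -> psi c s1 <= psi c s2.
Proof. by rewrite le_eqVlt => /predU1P[->//|/(psi_incr c)/ltW]. Qed.

Lemma psi_lt c s1 s2 : psi c s1 < psi c s2 -> s1 < s2.
Proof. by move=> h; rewrite ltNge; apply/negP => /(psi_leW c); rewrite leNgt h. Qed.

Lemma psi0 c : psi c 0 = 0.
Proof. by rewrite /psi; case: eqP => //; rewrite mul0r expR0 subrr mul0r. Qed.

Lemma psi1 c : psi c 1 = 1.
Proof. rewrite /psi; case: eqP => // /eqP c0; rewrite mul1r divff // subr_eq0.
by apply/negP => /eqP; rewrite -expR0 => /expR_inj /eqP; rewrite (negbTE c0). Qed.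


Lemma frac_lt (a b d1 d2 : R) : 0 < d1 * d2 -> a * d1 < b * d2 -> a / d2 < b / d1.
Proof.
move=> p h.
have d1n : d1 != 0 by apply/negP => /eqP e; move: p; rewrite e mul0r ltxx.
have d2n : d2 != 0 by apply/negP => /eqP e; move: p; rewrite e mulr0 ltxx.
have -> : a / d2 = (a * d1) / (d1 * d2) by field; apply/andP.
have -> : b / d1 = (b * d2) / (d1 * d2) by field; apply/andP.
by rewrite ltr_pM2r // invr_gt0.
Qed.

Lemma psi_pos s c : 0 < s < 1 -> 0 < c -> psi c s < s.
Proof.
move=> hs c0; rewrite /psi gt_eqF //.
have d : 0 < expR c - 1 by rewrite subr_gt0 expR_gt1.
rewrite ltr_pdivrMr // ; have := @bern s c hs (lt0r_neq0 c0) ; rewrite mulrC; lra.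
Qed.

Lemma psi_neg s c : 0 < s < 1 -> c < 0 -> s < psi c s.
Proof.
move=> hs c0; rewrite /psi lt_eqF //.
have d : expR c - 1 < 0 by rewrite subr_lt0 expR_lt1.
rewrite ltr_ndivlMr //; have := @bern s c hs (ltr0_neq0 c0); rewrite mulrC; lra.
Qed.

Lemma psi_decr s c1 c2 : 0 < s < 1 -> c1 < c2 -> psi c2 s < psi c1 s.
Proof.
move=> hs c12.
case: (ltrgtP c1 0) => [c1n|c1p|c10]; last first.
- have -> : psi c1 s = s by rewrite /psi c10 eqxx.
  by rewrite psi_pos // -c10.
- have c2p : 0 < c2 by apply: lt_trans c12.
  rewrite /psi !gt_eqF //.
  set X1 := expR c1; set X2 := expR c2; set Y1 := expR (s * c1); set Y2 := expR (s * c2).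
  have X1g : 1 < X1 by rewrite /X1 expR_gt1.
  have X12 : X1 < X2 by rewrite /X1 /X2 ltr_expR.
  set Z := expR (- c1).
  have XZ : X1 * Z = 1 by rewrite /X1 /Z -expRD subrr expR0.
  have e2 : expR (c2 - c1) = X2 * Z by rewrite /X2 /Z -expRD.
  have h1 := @bern2 s 0 c1 hs (negbT (lt_eqF c1p)).
  have h2 := @bern2 s c2 c1 hs (negbT (gt_eqF c12)).
  rewrite mulr0 expR0 sub0r -/Z -/Y1 in h1.
  rewrite e2 -/Y2 -/Y1 in h2.
  set D := s * Y1 * Z in h1 h2.
  have DX : D * X1 = s * Y1 by rewrite /D -mulrA [Z * _]mulrC XZ mulr1.
  have h1' : 1 < Y1 + D * (1 - X1) by lra.
  have h2' : Y2 < Y1 + D * (X2 - X1).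
    have : Y1 * (1 - s) + D * X2 = Y1 + D * (X2 - X1) by rewrite [D * (X2 - X1)]mulrBr DX; ring.
    have : s * Y1 * (X2 * Z) = D * X2 by rewrite /D; ring.
    lra.
  apply: frac_lt; first by apply: mulr_gt0; lra.
  have : (Y2 - 1) * (X1 - 1) < (Y1 - 1 + D * (X2 - X1)) * (X1 - 1).
    by rewrite ltr_pM2r; lra.
  have : D * (X1 - 1) * (X2 - X1) < (Y1 - 1) * (X2 - X1).
    by rewrite ltr_pM2r; lra.
  move=> a b; apply: (lt_trans b); have -> : (Y1 - 1 + D * (X2 - X1)) * (X1 - 1) =
    (Y1 - 1) * (X1 - 1) + D * (X1 - 1) * (X2 - X1) by ring.
  have -> : (Y1 - 1) * (X2 - 1) = (Y1 - 1) * (X1 - 1) + (Y1 - 1) * (X2 - X1) by ring.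
  by rewrite ltrD2l.
- case: (ltrgtP c2 0) => [c2n|c2p|c20]; last first.
  + have -> : psi c2 s = s by rewrite /psi c20 eqxx.
    exact: psi_neg.
  + by apply: (lt_trans (@psi_pos s c2 hs c2p)); exact: psi_neg.
  rewrite /psi !lt_eqF //.
  set X1 := expR c1; set X2 := expR c2; set Y1 := expR (s * c1); set Y2 := expR (s * c2).
  have X2l : X2 < 1 by rewrite /X2 expR_lt1.
  have X12 : X1 < X2 by rewrite /X1 /X2 ltr_expR.
  have X1p : 0 < X1 by rewrite expR_gt0.
  set Z := expR (- c2).
  have XZ : X2 * Z = 1 by rewrite /X2 /Z -expRD subrr expR0.
  have e2 : expR (c1 - c2) = X1 * Z by rewrite /X1 /Z -expRD.
  have h1 := @bern2 s 0 c2 hs (negbT (gt_eqF c2n)).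
  have h2 := @bern2 s c1 c2 hs (negbT (lt_eqF c12)).
  rewrite mulr0 expR0 sub0r -/Z -/Y2 in h1.
  rewrite e2 -/Y2 -/Y1 in h2.
  set D := s * Y2 * Z in h1 h2.
  have DX : D * X2 = s * Y2 by rewrite /D -mulrA [Z * _]mulrC XZ mulr1.
  have h1' : 1 < Y2 + D * (1 - X2) by lra.
  have h2' : Y1 < Y2 + D * (X1 - X2).
    have : Y2 * (1 - s) + D * X1 = Y2 + D * (X1 - X2) by rewrite [D * (X1 - X2)]mulrBr DX; ring.
    have : s * Y2 * (X1 * Z) = D * X1 by rewrite /D; ring.
    lra.
  apply: frac_lt; first by rewrite -mulrNN; apply: mulr_gt0; lra.
  have a : (1 - Y2) * (X2 - X1) < D * (1 - X2) * (X2 - X1).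
    by rewrite ltr_pM2r; lra.
  have b : (1 - Y2 + D * (X2 - X1)) * (1 - X2) < (1 - Y1) * (1 - X2).
    by rewrite ltr_pM2r; lra.
  have e3 : (Y2 - 1) * (X1 - 1) = (1 - Y2) * (1 - X2) + (1 - Y2) * (X2 - X1) by ring.
  have e4 : (Y1 - 1) * (X2 - 1) = (1 - Y1) * (1 - X2) by ring.
  have e5 : (1 - Y2 + D * (X2 - X1)) * (1 - X2) = (1 - Y2) * (1 - X2) + D * (1 - X2) * (X2 - X1) by ring.
  lra.
Qed.


Lemma powRE' (a y : R) : 0 < a -> a `^ y = expR (y * ln a).
Proof. by move=> a0; rewrite /powR gt_eqF. Qed.

Lemma lnK' (a : R) : 0 < a -> expR (ln a) = a.
Proof. by move=> a0; rewrite lnK // posrE. Qed.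

Lemma sig_range {c} {sg lam : R} : psi c sg = lam -> 0 < lam < 1 -> 0 < sg < 1.
Proof.
move=> <- /andP[h0 h1]; apply/andP; split.
  by apply: (psi_lt c); rewrite psi0.
by apply: (psi_lt c); rewrite psi1.
Qed.

Lemma sigma_ex c (lam : R) : c != 0 -> 0 < lam < 1 ->
  0 < 1 + lam * (expR c - 1) /\ psi c (ln (1 + lam * (expR c - 1)) / c) = lam.
Proof.
move=> c0 /andP[l0 l1].
have Bp : 0 < 1 + lam * (expR c - 1).
  have := expR_gt0 c; move=> e.
  have -> : 1 + lam * (expR c - 1) = (1 - lam) + lam * expR c by ring.
  by apply: addr_gt0; [rewrite subr_gt0 | apply: mulr_gt0].
split => //.
have ec : expR c - 1 != 0.
  by rewrite subr_eq0 -expR0; apply/negP => /eqP /expR_inj /eqP; rewrite (negbTE c0).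
rewrite /psi (negbTE c0) divfK // lnK' //.
by rewrite addrAC subrr add0r mulfK.
Qed.

Lemma psi_range c (t : R) : 0 < t < 1 -> 0 < psi c t < 1.
Proof.
move=> /andP[t0 t1]; apply/andP; split.
  by rewrite -(psi0 c); apply: psi_incr.
by rewrite -(psi1 c); apply: psi_incr.
Qed.

Lemma integrand_form (r p q x : R) : 1 < r -> p < q -> 1 < x < r ->
  exists sg, 0 < sg < 1 /\
    psi (q * ln r) sg = psi (p * ln r) (ln x / ln r) /\
    theta_integrand p q r x = 1 / Num.sqrt (expR (sg * ln r) ^+ 2 - x ^+ 2).
Proof.
move=> r1 pq /andP[x1 xr].
have r0 : 0 < r by apply: lt_trans r1.
have x0 : 0 < x by apply: lt_trans x1.
set L := ln r.
have L0 : 0 < L by rewrite /L ln_gt0.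
have Ln : L != 0 by rewrite gt_eqF.
set t := ln x / L.
have ht : 0 < t < 1.
  apply/andP; split; first by rewrite divr_gt0 // ln_gt0.
  by rewrite ltr_pdivrMr // mul1r /L ltr_ln // posrE.
have tL : t * L = ln x by rewrite /t divfK.
set lam := psi (p * L) t.
have hl : 0 < lam < 1 by apply: psi_range.
rewrite /theta_integrand.
have sqE : forall sg, expR (sg * L) ^+ 2 = expR (2 * (sg * L)).
  by move=> sg; rewrite expRM_natl.
case: (eqVneq p 0) => [p0|p0].
-
  have q0 : q != 0 by rewrite gt_eqF // -p0.
  have lt : lam = t by rewrite /lam p0 mul0r /psi eqxx.
  have qL : q * L != 0 by rewrite mulf_neq0.
  have [Bp Bpsi] := @sigma_ex (q * L) lam qL hl.
  set B := 1 + lam * (expR (q * L) - 1) in Bp Bpsi.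
  exists (ln B / (q * L)); split; first exact: (sig_range Bpsi hl).
  split; first by rewrite Bpsi.
  rewrite /= sqE.
  have -> : 1 + (r `^ q - 1) / ln r * ln x = B.
    by rewrite /B lt powRE' // -/L -tL /t; field.
  rewrite powRE' //; congr (_ / Num.sqrt (expR _ - _)); field.
  by apply/andP; split.
- case: (eqVneq q 0) => [q0|q0].
  +
    exists lam; split => //; split.
      by rewrite q0 mul0r /psi eqxx.
    rewrite /= ?andbF /= sqE powRE' //.
    have pL : p * L != 0 by rewrite mulf_neq0.
    have epL : expR (p * L) - 1 != 0.
      by rewrite subr_eq0 -expR0; apply/negP => /eqP /expR_inj /eqP; rewrite (negbTE pL).
    congr (_ / Num.sqrt (expR _ - _)).
    rewrite /lam /psi (negbTE pL) !powRE' // -/L -tL.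
    rewrite [t * (p * L)]mulrCA; field; exact: epL.
  +
    have qL : q * L != 0 by rewrite mulf_neq0.
    have pL : p * L != 0 by rewrite mulf_neq0.
    have epL : expR (p * L) - 1 != 0.
      by rewrite subr_eq0 -expR0; apply/negP => /eqP /expR_inj /eqP; rewrite (negbTE pL).
    have [Bp Bpsi] := @sigma_ex (q * L) lam qL hl.
    set B := 1 + lam * (expR (q * L) - 1) in Bp Bpsi.
    exists (ln B / (q * L)); split; first exact: (sig_range Bpsi hl).
    split; first by rewrite Bpsi.
    rewrite /= sqE.
    have -> : (r `^ p - r `^ q) / (r `^ p - 1) + (r `^ q - 1) / (r `^ p - 1) * x `^ p = B.
      rewrite /B /lam /psi (negbTE pL) !powRE' // -/L -tL.
      have -> : q * L = L * q by rewrite mulrC.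
      have -> : p * L = L * p by rewrite mulrC.
      have -> : t * (L * p) = p * (t * L) by ring.
      rewrite [L * p]mulrC [L * q]mulrC.
      field; exact: epL.
    rewrite powRE' //; congr (_ / Num.sqrt (expR _ - _)); field.
    by apply/andP; split.
Qed.

End Core.
Arguments integrand_form {R r p q x}.
Arguments psi_lt {R}.
Arguments psi_le {R}.

Lemma my_le_integral (R : realType) (D : set R) (f g : R -> \bar R) :
  (forall x, (0 <= f x)%E) -> (forall x, (0 <= g x)%E) ->
  (forall x, D x -> (f x <= g x)%E) ->
  (\int[lebesgue_measure]_(x in D) f x <= \int[lebesgue_measure]_(x in D) g x)%E.
Proof.
move=> f0 g0 fg.
rewrite ge0_integralE; last by move=> x _; exact: f0.
rewrite ge0_integralE; last by move=> x _; exact: g0.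
apply: ge_ereal_sup => _ [h hf <-]; apply: ereal_sup_ubound; exists h => //= x.
apply: (le_trans (hf x)); rewrite /patch; case: ifP => // /set_mem Dx; exact: fg.
Qed.

Lemma cmp (R : realType) (g1 g2 x : R) : 0 < x -> x < g2 -> g2 <= g1 ->
  1 / Num.sqrt (g1 ^+ 2 - x ^+ 2) <= 1 / Num.sqrt (g2 ^+ 2 - x ^+ 2).
Proof.
move=> x0 xg g21.
have d2 : 0 < g2 ^+ 2 - x ^+ 2.
  by rewrite subr_gt0 ltr_pXn2r // ?nnegrE ltW // (lt_trans x0).
have d12 : g2 ^+ 2 - x ^+ 2 <= g1 ^+ 2 - x ^+ 2.
  by rewrite lerD2r ler_pXn2r // ?nnegrE ltW // (lt_le_trans (lt_trans x0 xg)).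
rewrite !div1r lef_pV2 ?posrE ?sqrtr_gt0 //; last exact: lt_le_trans d12.
by rewrite ler_sqrt // ltW // (lt_le_trans d2).
Qed.

Lemma integrand_ge0 (R : realType) (p q r x : R) : (0 <= (theta_integrand p q r x)%:E)%E.
Proof.
by rewrite lee_fin /theta_integrand; case: ifP => _; [|case: ifP => _];
  rewrite divr_ge0 ?sqrtr_ge0.
Qed.

Theorem theorem5p1 (R : realType) :
  (forall p1 p2 q r : R, p1 <= p2 -> p2 < q -> 1 < r ->
     (Theta p1 q r <= Theta p2 q r)%E) /\
  (forall p q1 q2 r : R, p < q1 -> q1 <= q2 -> 1 < r ->
     (Theta p q2 r <= Theta p q1 r)%E).
Proof.
split.
- move=> p1 p2 q r p12 p2q r1.
  rewrite /Theta; apply: my_le_integral => [x|x|x]; [exact: integrand_ge0|exact: integrand_ge0|].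
  rewrite /= in_itv /= => /andP[x1 xr].
  have hx : 1 < x < r by rewrite x1 xr.
  have [s1 [hs1 [ps1 ->]]] := integrand_form r1 (le_lt_trans p12 p2q) hx.
  have [s2 [hs2 [ps2 ->]]] := integrand_form r1 p2q hx.
  rewrite lee_fin.
  have x0 : 0 < x by apply: lt_trans x1.
  have L0 : 0 < ln r by rewrite ln_gt0.
  set t := ln x / ln r in ps1 ps2.
  have ht : 0 < t < 1.
    apply/andP; split; first by rewrite divr_gt0 // ln_gt0.
    by rewrite ltr_pdivrMr // mul1r ltr_ln // posrE (lt_trans _ r1).
  have xE : x = expR (t * ln r) by rewrite /t divfK ?gt_eqF // lnK'.
  have ts2 : t < s2.
    apply: (psi_lt (q * ln r)); rewrite ps2; apply: psi_decr => //.
    by rewrite ltr_pM2r.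
  have s21 : s2 <= s1.
    apply: (psi_le (q * ln r)); rewrite ps1 ps2.
    move: p12; rewrite le_eqVlt => /predU1P[->//|p12].
    by apply/ltW/psi_decr => //; rewrite ltr_pM2r.
  apply: cmp => //.
    by rewrite {1}xE ltr_expR ltr_pM2r.
  by rewrite ler_expR ler_pM2r.
- move=> p q1 q2 r pq1 q12 r1.
  rewrite /Theta; apply: my_le_integral => [x|x|x]; [exact: integrand_ge0|exact: integrand_ge0|].
  rewrite /= in_itv /= => /andP[x1 xr].
  have hx : 1 < x < r by rewrite x1 xr.
  have [s1 [hs1 [ps1 ->]]] := integrand_form r1 pq1 hx.
  have [s2 [hs2 [ps2 ->]]] := integrand_form r1 (lt_le_trans pq1 q12) hx.
  rewrite lee_fin.
  have x0 : 0 < x by apply: lt_trans x1.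
  have L0 : 0 < ln r by rewrite ln_gt0.
  set t := ln x / ln r in ps1 ps2.
  have ht : 0 < t < 1.
    apply/andP; split; first by rewrite divr_gt0 // ln_gt0.
    by rewrite ltr_pdivrMr // mul1r ltr_ln // posrE (lt_trans _ r1).
  have xE : x = expR (t * ln r) by rewrite /t divfK ?gt_eqF // lnK'.
  have ts1 : t < s1.
    apply: (psi_lt (q1 * ln r)); rewrite ps1; apply: psi_decr => //.
    by rewrite ltr_pM2r.
  have s12 : s1 <= s2.
    apply: (psi_le (q1 * ln r)); rewrite ps1 -ps2.
    move: q12; rewrite le_eqVlt => /predU1P[->//|q12].
    by apply/ltW/psi_decr => //; rewrite ltr_pM2r.
  apply: cmp => //.
    by rewrite {1}xE ltr_expR ltr_pM2r.
  by rewrite ler_expR ler_pM2r.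
Qed.
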